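(* In the SBORS setting described in the context, for any round $t\le T$, any item $i\in\{1,\dots,N\}$ and any $r>1$, $$P\big(|u_i'(t)-\hat u_i(t)|>4\hat\sigma_{u_i}(t)\sqrt{\log (rR)}\big)\le\frac{1}{r^8R^7},\qquad P\big(|q'(t)-\hat q(t)|>4\hat\sigma_q(t)\sqrt{\log (rR)}\big)\le\frac{1}{r^8R^7}.$$
   Context: SBORS, with parameters $\alpha>0,\beta\ge2$ and integer $R\ge1$, maintains for each item $i$ of $N$ items a count $T_i(t)$ of views and estimate $\hat u_i(t)\in[0,1]$, and a count $N_q(t)$ and estimate $\hat q(t)\in[0,1]$, and sets $\hat\sigma_{u_i}(t)=\sqrt{\alpha\hat u_i(t)(1-\hat u_i(t))/(T_i(t)+1)}+\sqrt{\beta/T_i(t)}$, $\hat\sigma_q(t)=\sqrt{\alpha\hat q(t)(1-\hat q(t))/(N_q(t)+1)}+\sqrt{\beta/N_q(t)}$. In round $t$ it draws $\theta^{(1)},\dots,\theta^{(R)}$ i.i.d. $N(0,1)$, independently of the past, and sets $u_i'(t)=\max_{j\le R}\big(\hat u_i(t)+\theta^{(j)}\hat\sigma_{u_i}(t)\big)$ and $q'(t)=\max_{j\le R}\big(\hat q(t)+\theta^{(j)}\hat\sigma_q(t)\big)$. *)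

(* Defs.v *)
From HB Require Import structures.
From mathcomp Require Import all_boot all_order all_algebra.
From mathcomp Require Import all_classical all_reals all_analysis.
Set Implicit Arguments. Unset Strict Implicit. Unset Printing Implicit Defensive.
Import Order.TTheory GRing.Theory Num.Theory.
Import numFieldNormedType.Exports.
Local Open Scope classical_set_scope.
Local Open Scope ring_scope.

(* Standard deviation proxy of SBORS:
   sqrt(alpha x (1-x)/(n+1)) + sqrt(beta/n)   (x = estimate, n = count).
   Note: for n = 0, beta/0 = 0 by the MathComp convention. *)
Definition sbors_sigma {R : realType} (alpha beta x : R) (n : nat) : R :=
  Num.sqrt (alpha * x * (1 - x) / (n.+1)%:R) + Num.sqrt (beta / n%:R).

(* maximum of a nonempty finite family of reals (for n = 0 it returns 0) *)
Definition maxI {R : realType} (n : nat) (f : 'I_n -> R) : R :=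
  let s := [seq f j | j <- enum 'I_n] in foldr Num.max (head 0 s) s.

Definition sbors_perturb {R : realType} (Rn : nat) (x sig : R)
  (theta : 'I_Rn -> R) : R := maxI (fun j => x + theta j * sig).

(* Mutual independence of a finite family of real random variables:
   product rule for every family of Borel sets (taking B j = setT recovers
   every subfamily). *)
Definition mutually_independent d (T : measurableType d) {R : realType}
  (P : probability T R) (n : nat) (X : 'I_n -> {RV P >-> R}) : Prop :=
  forall B : 'I_n -> set R, (forall j, measurable (B j)) ->
    P [set w | forall j, B j (X j w)] = (\prod_(j < n) P (X j @^-1` B j))%E.

Definition std_normal d (T : measurableType d) {R : realType}
  (P : probability T R) (X : {RV P >-> R}) : Prop :=
  forall A : set R, measurable A -> distribution P X A = normal_prob 0 1 A.

(* Main.v *)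
Require Import Defs.
From HB Require Import structures.
From mathcomp Require Import all_boot all_order all_algebra.
From mathcomp Require Import all_classical all_reals all_analysis.
From mathcomp Require Import measurable_realfun.
From mathcomp Require Import ring lra.
Import Order.TTheory GRing.Theory Num.Theory.
Import numFieldNormedType.Exports.
Local Open Scope classical_set_scope.
Local Open Scope ring_scope.

Section G.
Variable R : realType.
Notation mu := (@lebesgue_measure R).
Let pdf := (@normal_pdf R 0 1).
Local Notation N := (@normal_prob R 0 1).

Lemma pdfE x : pdf x = normal_peak 1 * expR (- x ^+ 2 / 2).
Proof.
rewrite /pdf /normal_pdf oner_eq0 /normal_fun subr0 expr1n.
done.
Qed.

Lemma pdfN x : pdf (- x) = pdf x.
Proof. by rewrite !pdfE sqrrN. Qed.

Lemma pdf_ge0 x : 0 <= pdf x.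
Proof. exact: normal_pdf_ge0. Qed.

Lemma pdf_cont : continuous pdf.
Proof. apply: continuous_normal_pdf; exact: oner_neq0. Qed.

Lemma refl t : N `]-oo, - t] = N `[t, +oo[.
Proof.
rewrite /normal_prob -/pdf ge0_integration_by_substitutionNy.
- by apply: eq_integral => x _ /=; rewrite pdfN.
- exact: continuous_subspaceT pdf_cont.
- by move=> x _; exact: pdf_ge0.
Qed.
Lemma N0 : N [set 0] = 0%E.
Proof.
have := normal_prob_dominates (0:R) 1.
move=> /null_content_dominatesP; apply => //.
exact: lebesgue_measure_set1.
Qed.

Lemma half : (N `[0%R, +oo[ *+ 2 <= 1%:E)%E.
Proof.
have hT : N setT = 1%E by rewrite probability_setT.
have e1 : [set: R] = `]-oo, 0[ `|` `[0, +oo[.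
  by rewrite -setCitvl setUv.
have e2 : `]-oo, 0]%classic = `]-oo, 0[%classic `|` [set (0:R)].
  by rewrite setUitv1.
have d1 : `]-oo, 0[%classic `&` `[0, +oo[%classic = set0 :> set R.
  by rewrite -setCitvl setICr.
have d2 : `]-oo, 0[%classic `&` [set 0] = set0 :> set R.
  apply/seteqP; split => x //= [] + xe; by rewrite xe /= in_itv /= ltxx.
have h : N `]-oo, 0[%classic = N `[0%R, +oo[%classic.
  have := refl 0; rewrite oppr0 e2 measureU //= ?d2 // N0 adde0 //.
have -> : (1%:E = N setT)%E by rewrite hT.
rewrite e1 measureU //= h //.
Qed.
Lemma dshift (a : R) : (fun x : R => x - a)^`()%classic = cst 1.
Proof.
apply/funext => x; rewrite derive1E deriveB // derive_id derive_cst subr0 //.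
Qed.

Lemma shift (a : R) :
  (\int[mu]_(x in `[0%R, +oo[) (pdf x)%:E =
   \int[mu]_(x in `[a, +oo[) (pdf (x - a))%:E)%E.
Proof.
have := @increasing_ge0_integration_by_substitutiony R (fun x => x - a) pdf a.
rewrite subrr dshift => ->.
- by apply: eq_integral => x _; rewrite /= mulr1.
- by move=> x y _ _; rewrite ltrBlDr subrK.
- by move=> x _; exact: cst_continuous.
- exact: is_cvg_cst.
- exact: is_cvg_cst.
- split.
  + move=> x _; apply: derivableB => //.
  + apply: cvg_at_right_filter; apply: continuousB => //; exact: cvg_cst.
- exact: cvg_addrr.
- exact: continuous_subspaceT pdf_cont.
- by move=> x _; exact: pdf_ge0.
Qed.
Lemma tailH (a : R) : 0 <= a ->
  (N `[a, +oo[ <= (expR (- a ^+ 2 / 2))%:E * N `[0%R, +oo[)%E.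
Proof.
move=> a0.
have mpa : measurable_fun setT (fun x : R => pdf (x - a)).
  apply: continuous_measurable_fun => x.
  apply: (@continuous_comp _ _ _ (fun x : R => x - a) pdf); last exact: pdf_cont.
  by apply: continuousB => //; exact: cvg_cst.
rewrite /normal_prob -/pdf [X in (_ * X)%E](shift a) -ge0_integralZl //=.
- apply: ge0_le_integral => //=.
  + by move=> x _; rewrite lee_fin pdf_ge0.
  + apply/measurable_EFinP; apply: measurable_funTS; exact: measurable_normal_pdf.
  + apply/measurable_EFinP; apply: measurable_funTS; apply: measurable_funM => //.
  + move=> x; rewrite /= in_itv /= andbT => ax.
    rewrite -EFinM lee_fin !pdfE mulrCA ler_pM2l ?normal_peak_gt0 ?oner_neq0 //.
    rewrite -expRD ler_expR; nra.
- apply/measurable_EFinP; apply: measurable_funTS.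
  exact: mpa.
all: try by move=> x _; rewrite lee_fin pdf_ge0.
all: try by rewrite lee_fin expR_ge0.
Qed.
Lemma tail2 (a : R) : 0 <= a ->
  (N (`]-oo, (- a)%R[ `|` `]a, +oo[) <= (expR (- a ^+ 2 / 2))%:E)%E.
Proof.
move=> a0.
have le1 : (N (`]-oo, (- a)%R[ `|` `]a, +oo[) <= N (`]-oo, (- a)%R] `|` `[a, +oo[))%E.
  apply: le_measure; rewrite ?inE; try exact: measurableU.
  move=> x [] h; [left|right]; move: h; rewrite /= !in_itv /= ?andbT; exact: ltW.
have le2 : (N (`]-oo, (- a)%R] `|` `[a, +oo[) <= N `]-oo, (- a)%R] + N `[a, +oo[)%E.
  exact: measureU2.
apply: (le_trans le1); apply: (le_trans le2).
rewrite (refl a).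
have := @tailH a a0; have := half.
have f1 : N `[a, +oo[ \is a fin_num by exact: fin_num_measure.
have f2 : N `[0%R, +oo[ \is a fin_num by exact: fin_num_measure.
rewrite -(fineK f1) -(fineK f2).
move: (fine _) (fine _) => y z.
rewrite -EFinM -EFinD -EFin_natmul !lee_fin => h1 h2.
move: h2 (expR_ge0 (- a ^+ 2 / 2)); move: (expR _) => e h2 he.
rewrite mulr2n in h1.
have : 0 <= e * (1 - (z + z)) by apply: mulr_ge0; lra.
nra.
Qed.
End G.

Lemma foldr_max_mem {R : realType} (y : R) (s : seq R) :
  foldr Num.max y s \in y :: s.
Proof.
elim: s => [|z s IH] /=; first by rewrite mem_seq1.
rewrite /Num.max; case: ifP => _.
  by move: IH; rewrite !inE => /orP[->|->]; rewrite ?orbT.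
by rewrite !inE eqxx orbT.
Qed.

Lemma maxI_mem {R : realType} (n : nat) (f : 'I_n -> R) : (0 < n)%N ->
  exists j, maxI f = f j.
Proof.
move=> n0.
have : maxI f \in [seq f j | j <- enum 'I_n].
  rewrite /maxI /=.
  have := foldr_max_mem (head 0 [seq f j | j <- enum 'I_n]) [seq f j | j <- enum 'I_n].
  case E: [seq f j | j <- enum 'I_n] => [|z s] /=.
    by move/(congr1 size): E; rewrite size_map size_enum_ord => E; rewrite E in n0.
  by rewrite inE; case/orP => [/eqP ->|->] //; rewrite inE eqxx.
by case/mapP => j _ ->; exists j.
Qed.

Lemma measurable_foldr_max d (T : measurableType d) {R : realType}
  (I : Type) (g : I -> T -> R) (h : T -> R) (e : seq I) :
  (forall j, measurable_fun setT (g j)) -> measurable_fun setT h ->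
  measurable_fun setT (fun w => foldr Num.max (h w) [seq g j w | j <- e]).
Proof.
move=> mg mh; elim: e => [|j e IH] //=.
exact: (measurable_maxr (mg j) IH).
Qed.

Lemma measurable_maxI d (T : measurableType d) {R : realType} (n : nat)
  (g : 'I_n -> T -> R) :
  (forall j, measurable_fun setT (g j)) ->
  measurable_fun setT (fun w => maxI (fun j => g j w)).
Proof.
move=> mg; rewrite /maxI /=.
case: (enum 'I_n) => [|j e] /=; first exact: measurable_cst.
exact: (@measurable_foldr_max _ _ _ _ g (g j) (j :: e) mg (mg j)).
Qed.

Lemma one_side {R : realType} d (Omega : measurableType d)
  (P : probability Omega R) (Rn : nat) (th : 'I_Rn -> {RV P >-> R})
  (x s r : R) :
  (1 <= Rn)%N -> (forall j, std_normal (th j)) -> 0 <= s -> 1 < r ->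
  (P [set w | (4 * s * Num.sqrt (ln (r * Rn%:R)) <
        `|sbors_perturb x s (fun j => th j w) - x|)%R ]
     <= ((r ^+ 8 * Rn%:R ^+ 7)^-1)%:E)%E.
Proof.
move=> Rn1 hstd s0 r1.
set L := ln (r * Rn%:R).
have Rn0 : 0 < (Rn%:R : R) by rewrite ltr0n.
have rRn1 : 1 < r * Rn%:R.
  have : 1 <= (Rn%:R : R) by rewrite ler1n.
  nra.
have L0 : 0 < L by apply: ln_gt0.
set a := 4 * Num.sqrt L.
have a0 : 0 <= a by apply: mulr_ge0 => //; exact: sqrtr_ge0.
set B := (`]-oo, (- a)%R[ `|` `]a, +oo[)%classic : set R.
have mB : measurable B by apply: measurableU.
pose j0 : 'I_Rn := Ordinal Rn1.
pose F (k : nat) := (th (insubd j0 k)) @^-1` B.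
set E := [set w | _].
have mg : forall j, measurable_fun setT (fun w => x + th j w * s).
  move=> j; apply: measurable_funD => //; apply: measurable_funM => //.
have mE : measurable E.
  have mf : measurable_fun setT
      (fun w => `|sbors_perturb x s (fun j => th j w) - x|).
    apply: measurableT_comp; first exact: normr_measurable.
    apply: measurable_funB => //.
    exact: (@measurable_maxI _ _ _ _ (fun j w => x + th j w * s) mg).
  have := mf measurableT `]4 * s * Num.sqrt L, +oo[%classic (measurable_itv _).
  rewrite setTI; congr measurable; apply/seteqP; split => w /=;
    by rewrite in_itv /= andbT.
have sub : E `<=` \big[setU/set0]_(k < Rn) F k.
  rewrite -bigcup_mkord => w /=.
  rewrite /sbors_perturb.
  rewrite /E /sbors_perturb /=. have [j ->] := maxI_mem _ (fun j => x + th j w * s) Rn1.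
  rewrite addrC addKr normrM (ger0_norm s0) => h.
  exists (val j); first exact: ltn_ord.
  rewrite /F /=.
  have -> : insubd j0 (val j) = j by apply: val_inj; rewrite val_insubd ltn_ord.
  have spos : 0 < s.
    rewrite lt_def; apply/andP; split => //; apply/eqP => s00.
    by move: h; rewrite s00 !mulr0 mul0r ltxx.
  have : a < `|th j w|.
    by rewrite -(ltr_pM2r spos) /a mulrAC.
  rewrite /B /= !in_itv /=.
  case: (ger0P (th j w)) => hj ha; [right|left]; first by rewrite ha.
  by rewrite ltrNr.
have mF : forall k, measurable (F k).
  move=> k; rewrite /F -[X in measurable X]setTI.
  exact: (measurable_funP (th (insubd j0 k))).
have PF : forall k, (P (F k) <= (expR (- a ^+ 2 / 2))%:E)%E.
  move=> k; rewrite /F.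
  have := hstd (insubd j0 k) B mB; rewrite /distribution /pushforward => ->.
  exact: tail2.
have hsub := @content_subadditive _ _ _ P E F Rn (fun k _ => mF k) mE sub.
apply: (le_trans hsub).
apply: le_trans; first by apply: lee_sum => k _; exact: (PF k).
rewrite sumEFin sumr_const card_ord lee_fin.
have rRn0 : 0 < r * Rn%:R by apply: lt_trans rRn1.
have ea : - a ^+ 2 / 2 = - ln ((r * Rn%:R) ^+ 8).
  rewrite lnXn // -/L /a exprMn sqr_sqrtr ?ltW // -mulr_natr.
  by field.
rewrite ea expRN lnK; last by rewrite posrE exprn_gt0.
have r0 : r != 0 by apply/eqP => r0; move: r1; rewrite r0 ltr10.
have Rn0' : (Rn%:R : R) != 0 by rewrite gt_eqF.
rewrite -mulr_natr exprMn le_eqVlt; apply/orP; left; apply/eqP.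
rewrite mul1r -[X in X = _]mulr_natr.
by field; rewrite Rn0' r0.
Qed.

Theorem lemma3 (R : realType) (d : measure_display) (Omega : measurableType d)
  (P : probability Omega R)
  (alpha beta : R) (Rn N Tmax : nat)
  (uhat : nat -> 'I_N -> R) (Tc : nat -> 'I_N -> nat)
  (qhat : nat -> R) (Nq : nat -> nat)
  (theta : nat -> 'I_Rn -> {RV P >-> R}) :
  0 < alpha -> 2 <= beta -> (1 <= Rn)%N ->
  (forall t i, 0 <= uhat t i <= 1) -> (forall t, 0 <= qhat t <= 1) ->
  (forall t j, std_normal (theta t j)) ->
  (forall t, mutually_independent (theta t)) ->
  forall (t : nat) (i : 'I_N) (r : R), (t <= Tmax)%N -> 1 < r ->
  let su := sbors_sigma alpha beta (uhat t i) (Tc t i) in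
  let sq := sbors_sigma alpha beta (qhat t) (Nq t) in
  (P [set w | (4 * su * Num.sqrt (ln (r * Rn%:R)) <
        `|sbors_perturb (uhat t i) su (fun j => theta t j w) - uhat t i|)%R ]
     <= ((r ^+ 8 * Rn%:R ^+ 7)^-1)%:E)%E /\
  (P [set w | (4 * sq * Num.sqrt (ln (r * Rn%:R)) <
        `|sbors_perturb (qhat t) sq (fun j => theta t j w) - qhat t|)%R ]
     <= ((r ^+ 8 * Rn%:R ^+ 7)^-1)%:E)%E.
Proof.
move=> _ _ Rn1 _ _ hstd _ t i r _ r1 su sq.
have sig0 : forall x n, 0 <= sbors_sigma alpha beta x n.
  by move=> x n; rewrite /sbors_sigma addr_ge0 ?sqrtr_ge0.
split; apply: one_side => //; exact: sig0.
Qed.
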